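(* There is no automorphism $\varphi$ of $E$ of type 4 such that its linearization $\varphi_\ell$ is the identity map on $E$.
   Context: $F$ is a field of characteristic zero, $L$ an infinite-dimensional $F$-vector space with basis $e_1,e_2,\ldots$, $E$ the Grassmann algebra of $L$. An automorphism $\varphi$ of $E$ with $\varphi^2=\mathrm{id}$ is of type 4 if for every basis $\gamma$ of $L$ no element $v\in\gamma$ satisfies $\varphi(v)=\pm v$. Linearization: write $\varphi(e_i)=u_i+v_i$ with $u_i\in L$ and $v_i$ a linear combination of monomials of length $\ge2$; $\varphi_\ell$ is the endomorphism of $E$ with $\varphi_\ell(e_i)=u_i$ for all $i$. *)

(* Defs.v *)
From HB Require Import structures.
From mathcomp Require Import all_boot all_order all_algebra.
From mathcomp Require Import finmap.
Set Implicit Arguments. Unset Strict Implicit. Unset Printing Implicit Defensive.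
Import Order.TTheory GRing.Theory Num.Theory.
Local Open Scope ring_scope.
Local Open Scope fset_scope.

Section Grassmann.
Variable F : fieldType.

(* A monomial e_{i1} ... e_{ik} (i1 < ... < ik) is encoded by the finite set
   {i1,...,ik}; an element of E is a finitely supported family of
   coefficients indexed by monomials. *)
Definition grass := {fsfun {fset nat} -> F with 0}.

Definition gzero : grass := [fsfun S in fset0 => (0 : F)].
Definition gone : grass := [fsfun S in [fset fset0] => (1 : F)].
Definition gen (i : nat) : grass := [fsfun S in [fset [fset i]] => (1 : F)].

Definition gadd (x y : grass) : grass :=
  [fsfun S in finsupp x `|` finsupp y => (x S + y S)%R].
Definition gscale (c : F) (x : grass) : grass :=
  [fsfun S in finsupp x => (c * x S)%R].

(* e_A e_B = gsign A B e_{A u B} if A, B disjoint, 0 otherwise *)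
Definition gsign (A B : {fset nat}) : F :=
  (-1) ^+ (\sum_(a <- A) \sum_(b <- B) (b < a)%N)%N.

Definition gmul (x y : grass) : grass :=
  [fsfun S in [fset A `|` B | A in finsupp x, B in finsupp y] =>
     \sum_(A <- finsupp x) \sum_(B <- finsupp y |
            (A `&` B == fset0) && (A `|` B == S))
        (gsign A B * x A * y B)%R].

Definition gsum (s : seq grass) : grass := foldr gadd gzero s.
Definition gprod (s : seq grass) : grass := foldr gmul gone s.

(* L = span of the e_i = elements supported on monomials of length 1 *)
Definition inL (x : grass) : bool := all (fun S => #|` S| == 1%N) (finsupp x).

Definition lin_part (x : grass) : grass :=
  [fsfun S in [fset S in finsupp x | #|` S| == 1%N] => x S].

Definition is_automorphism (phi : grass -> grass) : Prop :=
  [/\ forall x y, phi (gadd x y) = gadd (phi x) (phi y),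
      forall c x, phi (gscale c x) = gscale c (phi x),
      forall x y, phi (gmul x y) = gmul (phi x) (phi y),
      phi gone = gone & bijective phi].

Definition basis_of_L (gamma : grass -> Prop) : Prop :=
  [/\ forall v, gamma v -> inL v,
      forall (s : seq grass) (c : grass -> F), uniq s ->
        (forall v, v \in s -> gamma v) ->
        gsum [seq gscale (c v) v | v <- s] = gzero ->
        forall v, v \in s -> c v = 0 &
      forall x, inL x -> exists (s : seq grass) (c : grass -> F),
        (forall v, v \in s -> gamma v) /\
        x = gsum [seq gscale (c v) v | v <- s]].

Definition type4 (phi : grass -> grass) : Prop :=
  forall gamma, basis_of_L gamma ->
    forall v, gamma v -> phi v <> v /\ phi v <> gscale (-1) v.

(* the linearization phi_l: the endomorphism of E with phi_l(e_i) = u_i,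
   u_i the L-component of phi(e_i); on a monomial e_{i1}...e_{ik}
   (i1 < ... < ik) it gives u_{i1} ... u_{ik}, extended linearly. *)
Definition linearization (phi : grass -> grass) (x : grass) : grass :=
  gsum [seq gscale (x M)
              (gprod [seq lin_part (phi (gen i)) | i <- sort leq (M : seq nat)])
       | M <- finsupp x].

End Grassmann.

(* Main.v *)
Require Import Defs.
From HB Require Import structures.
From mathcomp Require Import all_boot all_order all_algebra finmap zify.
Set Implicit Arguments. Unset Strict Implicit. Unset Printing Implicit Defensive.
Import Order.TTheory GRing.Theory Num.Theory.
Local Open Scope fset_scope.
Local Open Scope ring_scope.

Lemma sum_delta (F : fieldType) (T : eqType) (s : seq T) (C : T) (g : T -> F) :
  uniq s -> \sum_(B <- s) (if B == C then g B else 0) = if C \in s then g C else 0.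
Proof.
elim: s => [|a s IH] /=; first by rewrite big_nil.
case/andP => ans us; rewrite big_cons IH // in_cons.
case: eqP => [ea|ne]; last by rewrite add0r; case: eqP => // e; case: ne.
by subst a; rewrite eqxx /= (negbTE ans) addr0.
Qed.

Lemma gdflt (F : fieldType) (x : grass F) S : S \notin finsupp x -> x S = 0.
Proof. by move=> h; rewrite fsfun_dflt. Qed.

Lemma gzeroE (F : fieldType) S : gzero F S = 0.
Proof. by rewrite /gzero fsfunE; case: (S \in fset0). Qed.

Lemma goneE (F : fieldType) S : gone F S = (S == fset0)%:R.
Proof. by rewrite /gone fsfunE inE; case: ifP. Qed.

Lemma genE (F : fieldType) i S : gen F i S = (S == [fset i])%:R.
Proof. by rewrite /gen fsfunE inE; case: ifP. Qed.

Lemma gaddE (F : fieldType) (x y : grass F) S : gadd x y S = x S + y S.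
Proof.
rewrite /gadd fsfunE; case: ifP => // /negbT.
rewrite inE negb_or => /andP[hx hy].
by rewrite !gdflt // addr0.
Qed.

Lemma gscaleE (F : fieldType) c (x : grass F) S : gscale c x S = c * x S.
Proof.
rewrite /gscale fsfunE; case: ifP => // /negbT hx.
by rewrite gdflt // mulr0.
Qed.

Lemma gsumE (F : fieldType) (s : seq (grass F)) S : gsum s S = \sum_(x <- s) x S.
Proof.
elim: s => [|a s IH] /=; first by rewrite big_nil gzeroE.
by rewrite big_cons gaddE IH.
Qed.

Lemma sum_fset_same (F : fieldType) (T : choiceType) (K1 K2 : {fset T}) (f : T -> F) :
  (forall A, A \in K1 -> A \notin K2 -> f A = 0) ->
  (forall A, A \in K2 -> A \notin K1 -> f A = 0) ->
  \sum_(A <- K1) f A = \sum_(A <- K2) f A.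
Proof.
move=> h1 h2.
rewrite (big_fset_incl _ (fsubsetUl K1 K2)); last first.
  by move=> A; rewrite inE => /orP[->//|h] hn; apply: h2.
rewrite [RHS](big_fset_incl _ (fsubsetUr K1 K2)) //.
by move=> A; rewrite inE => /orP[h|->//] hn; apply: h1.
Qed.

Lemma disj_union (A B S : {fset nat}) :
  ((A `&` B == fset0) && (A `|` B == S)) = (A `<=` S) && (B == S `\` A).
Proof.
apply/idP/idP.
  case/andP => /eqP hI /eqP hU; rewrite -hU fsubsetUl /=.
  apply/eqP/fsetP => z; rewrite !inE.
  have := congr1 (fun X => z \in X) hI; rewrite /= !inE.
  by case: (z \in A); case: (z \in B).
case/andP => /fsubsetP hAS /eqP ->; apply/andP; split.
  apply/eqP/fsetP => z; rewrite !inE.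
  by case: (z \in A).
apply/eqP/fsetP => z; rewrite !inE.
by case hz: (z \in A) => //=; rewrite (hAS z hz).
Qed.

Lemma gmulE (F : fieldType) (x y : grass F) S :
  gmul x y S = \sum_(A <- fpowerset S) gsign F A (S `\` A) * x A * y (S `\` A).
Proof.
have inner : forall A, \sum_(B <- finsupp y | (A `&` B == fset0) && (A `|` B == S))
      (gsign F A B * x A * y B) =
    if A `<=` S then gsign F A (S `\` A) * x A * y (S `\` A) else 0.
  move=> A; rewrite big_mkcond /=.
  under eq_bigr => B _ do rewrite disj_union.
  case: ifP => hAS /=; last by rewrite big1.
  rewrite (@sum_delta _ _ _ _ (fun B => gsign F A B * x A * y B)); last exact: fset_uniq.
  by case: ifP => // /negbT h; rewrite (gdflt h) mulr0.
have D : \sum_(A <- finsupp x) \sum_(B <- finsupp y | (A `&` B == fset0) && (A `|` B == S))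
      (gsign F A B * x A * y B) = 
    \sum_(A <- fpowerset S) gsign F A (S `\` A) * x A * y (S `\` A).
  under eq_bigr => A0 _ do rewrite inner.
  rewrite (sum_fset_same (K2 := fpowerset S) (f := fun A => if A `<=` S then
            gsign F A (S `\` A) * x A * y (S `\` A) else 0)).
  - by apply: eq_big_seq => A; rewrite fpowersetE => ->.
  - by move=> A _; rewrite fpowersetE => /negbTE ->.
  - move=> A; rewrite fpowersetE => -> h; by rewrite gdflt // mulr0 mul0r.
rewrite /gmul fsfunE; case: ifP => // /negbT hS.
rewrite -D big1_fset // => A hA _; rewrite big_mkcond big1_fset //= => B hB _.
case: ifP => // /andP[_ /eqP hU]; case/negP: hS; rewrite -hU.
by apply/imfset2P; exists A => //; exists B.
Qed.

Lemma gsign0r (F : fieldType) A : gsign F A fset0 = 1.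
Proof.
rewrite /gsign big1 // => a _; exact: big_seq_fset0.
Qed.

Lemma gsign0l (F : fieldType) B : gsign F fset0 B = 1.
Proof. by rewrite /gsign big_seq_fset0. Qed.

Lemma gmul1E (F : fieldType) (x : grass F) S : gmul x (gone F) S = x S.
Proof.
rewrite gmulE.
rewrite (eq_big_seq (fun A => if A == S then x A else 0)).
  by rewrite sum_delta ?fset_uniq // fpowersetE fsubset_refl.
move=> A; rewrite fpowersetE => hAS; rewrite goneE fsetD_eq0.
have -> : (S `<=` A) = (A == S) by rewrite eqEfsubset hAS.
by case: eqP => [->|_]; rewrite ?gsign0r ?fsetDv ?gsign0r ?mul1r ?mulr1 ?mulr0.
Qed.

Lemma gmul_at0 (F : fieldType) (x y : grass F) : gmul x y fset0 = x fset0 * y fset0.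
Proof.
by rewrite gmulE fpowerset0 big_seq_fset1 fsetDv gsign0l mul1r.
Qed.

Lemma gmul_gen_gen (F : fieldType) j : gmul (gen F j) (gen F j) = gzero F.
Proof.
apply/fsfunP => S; rewrite gmulE gzeroE big1_fset // => A _ _.
rewrite !genE; case: eqP => [hA|]; last by rewrite mulr0 mul0r.
case: eqP => [hB|]; last by rewrite mulr0.
have : j \in S `\` A by rewrite hB inE.
by rewrite inE hA inE eqxx.
Qed.

Definition ordG (F : fieldType) d (x : grass F) := forall S, (#|` S| < d)%N -> x S = 0.
Definition agr (F : fieldType) d (x y : grass F) := forall S, (#|` S| <= d)%N -> x S = y S.

Lemma cardD_sub (A S : {fset nat}) : A `<=` S -> #|` S `\` A| = (#|` S| - #|` A|)%N.
Proof. exact: cardfsDS. Qed.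

Lemma mul_ord (F : fieldType) a b (x y : grass F) :
  ordG a x -> ordG b y -> ordG (a + b) (gmul x y).
Proof.
move=> hx hy S hS; rewrite gmulE big1_fset // => A; rewrite fpowersetE => hAS _.
have hc := cardD_sub hAS; have hle := fsubset_leq_card hAS.
case: (ltnP #|` A| a) => ha; first by rewrite hx // mulr0 mul0r.
by rewrite hy ?mulr0 //; lia.
Qed.

Lemma mul_agr (F : fieldType) a b (x x' y y' : grass F) :
  ordG a x -> agr a x x' -> ordG b y -> agr b y y' ->
  agr (a + b) (gmul x y) (gmul x' y').
Proof.
move=> ox ax oy ay S hS; rewrite !gmulE; apply: eq_big_seq => A.
rewrite fpowersetE => hAS.
have hc := cardD_sub hAS; have hle := fsubset_leq_card hAS.
case: (leqP #|` A| a) => ha.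
  rewrite -ax //; case: (leqP #|` S `\` A| b) => hb; first by rewrite ay.
  by rewrite ox ?mulr0 ?mul0r //; lia.
have h1 : (#|` S `\` A| < b)%N by lia.
by rewrite -ay ?oy ?mulr0 //; lia.
Qed.

Lemma prod_agr (F : fieldType) (I : Type) (f f' : I -> grass F) (r : seq I) :
  (forall i, ordG 1 (f i)) -> (forall i, agr 1 (f i) (f' i)) ->
  ordG (size r) (gprod (map f r)) /\ agr (size r) (gprod (map f r)) (gprod (map f' r)).
Proof.
move=> o a; elim: r => [|i r [IHo IHa]] /=; first by split.
split; first by have := mul_ord (o i) IHo; rewrite add1n.
by have := mul_agr (o i) (a i) IHo IHa; rewrite add1n.
Qed.

Lemma ord_agr (F : fieldType) d (x y : grass F) : ordG d x -> agr d x y -> ordG d y.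
Proof. by move=> o a S hS; rewrite -a ?o //; apply: ltnW. Qed.

Lemma phi0 (F : fieldType) (phi : grass F -> grass F) :
  is_automorphism phi -> phi (gzero F) = gzero F.
Proof.
case=> _ hs _ _ _.
have e : forall z : grass F, gscale 0 z = gzero F.
  by move=> z; apply/fsfunP => S; rewrite gscaleE gzeroE mul0r.
by rewrite -(e (gzero F)) hs e.
Qed.

Lemma phi_sum (F : fieldType) (phi : grass F -> grass F) s :
  is_automorphism phi -> phi (gsum s) = gsum (map phi s).
Proof.
move=> h; elim: s => [|a s IH] /=; first exact: phi0.
by case: h => ha _ _ _ _; rewrite ha IH.
Qed.

Lemma phi_prod (F : fieldType) (phi : grass F -> grass F) s :
  is_automorphism phi -> phi (gprod s) = gprod (map phi s).
Proof.
move=> h; elim: s => [|a s IH] /=; first by case: h.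
by case: h => _ _ hm _ _; rewrite hm IH.
Qed.

Lemma seq_fset1 (j : nat) : enum_fset [fset j] = [:: j].
Proof.
have hs : size (enum_fset [fset j]) = 1%N := cardfs1 j.
case e: (enum_fset [fset j]) hs => [|a [|b l]] // _.
have : a \in [fset j] by rewrite -[_ \in _]/(a \in enum_fset _) e mem_head.
by rewrite inE => /eqP ->.
Qed.

Lemma sort_fset1 (j : nat) : sort leq (enum_fset [fset j]) = [:: j].
Proof. by rewrite seq_fset1. Qed.

Lemma linE (F : fieldType) (phi : grass F -> grass F) x T :
  linearization phi x T = \sum_(M <- finsupp x) x M *
     (gprod [seq lin_part (phi (gen F i)) | i <- sort leq (enum_fset M)]) T.
Proof.
rewrite /linearization gsumE big_map; apply: eq_bigr => M _; by rewrite gscaleE.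
Qed.

Lemma supp_sum (F : fieldType) (x : grass F) (K : {fset {fset nat}}) (h : {fset nat} -> F) :
  (forall M, M \notin K -> x M = 0) ->
  \sum_(M <- finsupp x) x M * h M = \sum_(M <- K) x M * h M.
Proof.
move=> hK; apply: sum_fset_same => M.
  by move=> _ /hK ->; rewrite mul0r.
by move=> _ /gdflt ->; rewrite mul0r.
Qed.

Lemma ord_gen (F : fieldType) j : ordG 1 (gen F j).
Proof.
move=> S hS; rewrite genE; case: eqP => // e.
by move: hS; rewrite e cardfs1.
Qed.

Lemma std_basis (F : fieldType) : basis_of_L (fun v => exists j, v = gen F j).
Proof.
split.
- move=> v [j ->]; rewrite /inL; apply/(allP (s := finsupp (gen F j))) => S; rewrite mem_finsupp genE.
  by case: (S =P [fset j]) => [->|]; rewrite ?cardfs1 ?eqxx.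
- move=> s c us hs hsum v hv; have [j ej] := hs v hv.
  have := congr1 (fun z : grass F => z [fset j]) hsum; rewrite /= gsumE gzeroE big_map.
  rewrite (bigD1_seq v) //= big_seq_cond big1 ?addr0.
    by rewrite gscaleE ej genE eqxx mulr1.
  move=> w /andP[hw nw]; have [l el] := hs w hw.
  rewrite gscaleE el genE; case: eqP => [/fset1_inj e|]; last by rewrite mulr0.
  by move: nw; rewrite el ej e eqxx.
- move=> x hx; rewrite /inL in hx.
  pose hd (S : {fset nat}) := head 0%N (enum_fset S).
  have hdE : forall S, S \in finsupp x -> S = [fset hd S].
    move=> S hS; have := allP (s := finsupp x) hx S hS; case/cardfs1P => a ->.
    by rewrite /hd seq_fset1.
  pose c (v : grass F) := \sum_(S <- finsupp x) x S * v S.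
  exists [seq gen F (hd M) | M <- finsupp x], c; split.
    by move=> v /mapP [M _ ->]; exists (hd M).
  apply/fsfunP => T; rewrite gsumE !big_map.
  have ind : forall S U, S \in finsupp x -> gen F (hd S) U = (U == S)%:R.
    by move=> S U hS; rewrite genE -hdE.
  rewrite (eq_big_seq (fun S => if S == T then x S else 0)).
    by rewrite sum_delta ?fset_uniq //; case: ifP => // /negbT /gdflt ->.
  move=> S hS; rewrite gscaleE ind // /c.
  rewrite (eq_big_seq (fun S' => if S' == S then x S' else 0)).
    rewrite sum_delta ?fset_uniq // hS eq_sym.
    by case: eqP => _; rewrite ?mulr1 ?mulr0.
  by move=> S' hS'; rewrite ind // mulr_natr mulrb.
Qed.

Theorem theorem5p1 (F : fieldType) (charF0 : [pchar F]%R =i pred0)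
  (phi : grass F -> grass F) :
  is_automorphism phi ->
  (forall x, phi (phi x) = x) ->
  type4 phi ->
  ~ (forall x, linearization phi x = x).
Proof.
move=> hA hinv h4 hlin.
have hu : forall j, lin_part (phi (gen F j)) = gen F j.
  move=> j; apply/fsfunP => T.
  have := hlin (gen F j); move/(congr1 (fun z : grass F => z T)).
  rewrite linE (@supp_sum _ _ [fset [fset j]]); last first.
    by move=> M; rewrite inE genE; case: eqP.
  by rewrite big_seq_fset1 sort_fset1 /= gmul1E genE eqxx mul1r.
have hg1 : forall j S, #|` S| = 1%N -> phi (gen F j) S = gen F j S.
  move=> j S hS; rewrite -{2}(hu j) /lin_part fsfunE !inE hS eqxx andbT.
  by case: ifP => // /negbT /gdflt ->.
have hg0 : forall j, phi (gen F j) fset0 = 0.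
  move=> j; have [_ _ hm _ _] := hA.
  have := congr1 phi (gmul_gen_gen F j); rewrite hm phi0 //.
  move/(congr1 (fun z : grass F => z fset0)); rewrite gmul_at0 gzeroE.
  by move/eqP; rewrite mulf_eq0 orbb => /eqP.
have og : forall j, ordG 1 (phi (gen F j)).
  by move=> j S hS; move: hS; rewrite ltnS leqn0 => /eqP /cardfs0_eq ->.
have ag : forall j, agr 1 (phi (gen F j)) (gen F j).
  move=> j S; rewrite leq_eqVlt ltnS leqn0 => /orP[/eqP|/eqP /cardfs0_eq ->].
    exact: hg1.
  by rewrite hg0 genE; case: eqP => // e; have := cardfs1 j; rewrite -e cardfs0.
have decomp : forall (x : grass F) T, x T = \sum_(M <- finsupp x) x M *
     (gprod [seq gen F i | i <- sort leq (enum_fset M)]) T.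
  move=> x T; rewrite -{1}(hlin x) linE; apply: eq_bigr => M _.
  by rewrite (eq_map (fun i => hu i)).
have phiE : forall (x : grass F) T, phi x T = \sum_(M <- finsupp x) x M *
     (gprod [seq phi (gen F i) | i <- sort leq (enum_fset M)]) T.
  move=> x T; rewrite -{1}(hlin x) /linearization phi_sum // -map_comp gsumE big_map.
  apply: eq_bigr => M _ /=; have [_ hs _ _ _] := hA.
  rewrite hs gscaleE phi_prod // -map_comp.
  by congr (_ * (gprod _) T); apply: eq_map => i /=; rewrite hu.
have two : (2%:R : F) != 0.
  by have := charF0 2; rewrite !inE /= => ->.
set G := phi (gen F 0).
have key : forall n T, #|` T| = n -> G T = gen F 0 T.
  elim/ltn_ind => n IH T hT.
  case: (leqP n 1) => hn; first by apply: ag; rewrite hT.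
  have hgen0T : gen F 0 T = 0.
    by rewrite genE; case: eqP => // e; move: hT hn; rewrite e cardfs1 => <-.
  rewrite hgen0T.
  have e1 := phiE G T; rewrite /G hinv hgen0T -/G in e1.
  have e2 := decomp G T.
  have hM0 : forall M : {fset nat}, (n <= #|` M|)%N -> (M == [fset 0%N]) = false.
    by move=> M hM; apply/negbTE/eqP => e; move: hM; rewrite e cardfs1; lia.
  have e3 : \sum_(M <- finsupp G) G M *
       (gprod [seq phi (gen F i) | i <- sort leq (enum_fset M)]) T =
     \sum_(M <- finsupp G) (G M * (gprod [seq gen F i | i <- sort leq (enum_fset M)]) T
        + (if M == [fset 0%N] then G T else 0)).
    apply: eq_big_seq => M hM.
    have [oP aP] := prod_agr (sort leq (enum_fset M)) og ag.
    have oQ := ord_agr oP aP.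
    rewrite size_sort in oP aP oQ.
    case: (ltngtP #|` M| n) => hMn.
    - rewrite (IH _ hMn M erefl) genE.
      case: eqP => [eM|neM]; last by rewrite !mul0r addr0.
      by rewrite eM sort_fset1 /= !gmul1E hgen0T !mul1r add0r.
    - by rewrite hM0 ?(ltnW hMn) // oP ?oQ ?hT // mulr0 addr0.
    - by rewrite hM0 ?hMn // aP ?hT ?hMn // addr0.
  rewrite big_split /= -e2 -e1 sum_delta ?fset_uniq // mem_finsupp in e3.
  have h1 : G [fset 0%N] = 1 by rewrite /G hg1 ?cardfs1 // genE eqxx.
  rewrite h1 oner_neq0 in e3.
  move: e3 => /eqP; rewrite eq_sym -mulr2n -mulr_natr mulf_eq0 (negbTE two) orbF.
  by move/eqP.
have hG : G = gen F 0 by apply/fsfunP => T; exact: (key _ T erefl).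
have [h _] := h4 _ (std_basis F) (gen F 0) (ex_intro _ 0%N erefl).
exact: h.
Qed.
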